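(* Let $K$ be a field with $\operatorname{char}(K)\neq2$ and let $M$ be a Leibniz $K$-algebra. Let $M\star M$ be the Leibniz $K$-algebra generated by symbols $m_1\otimes m_2$ and $m_1\circledast m_2$ ($m_1,m_2\in M$), both $K$-bilinear in their arguments, subject to the relations, for all $m_1,m_2,m_3,m_4\in M$: $m_1\otimes[m_2,m_3]=[m_1,m_2]\otimes m_3-[m_1,m_3]\otimes m_2$; $m_1\circledast[m_2,m_3]=[m_1,m_2]\circledast m_3-[m_1,m_3]\circledast m_2$; $[m_1,m_2]\otimes m_3=[m_1,m_3]\circledast m_2-m_1\otimes[m_3,m_2]$; $[m_1,m_2]\circledast m_3=[m_1,m_3]\otimes m_2-m_1\circledast[m_3,m_2]$; $m_1\otimes[m_2,m_3]=-m_1\otimes[m_3,m_2]$; $m_1\circledast[m_2,m_3]=-m_1\circledast[m_3,m_2]$; and, for every choice of symbols $\diamond,\diamond'\in\{\otimes,\circledast\}$, $[m_1,m_2]\otimes[m_3,m_4]=[m_1\diamond m_2,m_3\diamond' m_4]=[m_1,m_2]\circledast[m_3,m_4]$. Consider the crossed module of Leibniz $K$-algebras $(M\star M,M,(\cdot_1,\cdot_2),\partial)$ with, on generators, $m\cdot_1(m_1\otimes m_2)=[m,m_1]\otimes m_2-[m,m_2]\circledast m_1$, $m\cdot_1(m_1\circledast m_2)=[m,m_1]\circledast m_2-[m,m_2]\otimes m_1$, $(m_1\otimes m_2)\cdot_2m=[m_1,m]\otimes m_2+m_1\otimes[m_2,m]$, $(m_1\circledast m_2)\cdot_2m=[m_1,m]\circledast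 m_2+m_1\circledast[m_2,m]$, and $\partial(m_1\otimes m_2)=[m_1,m_2]=\partial(m_1\circledast m_2)$. Then the pair of $K$-bilinear maps $\{-,-\},\langle-,-\rangle\colon M\times M\to M\star M$, $\{m_1,m_2\}=m_1\otimes m_2$, $\langle m_1,m_2\rangle=m_1\circledast m_2$, is a braiding on this crossed module.
   Context: A Leibniz $K$-algebra: bilinear bracket with $[x,[y,z]]=[[x,y],z]-[[x,z],y]$. A crossed module of Leibniz algebras $(L,N,(\cdot_1,\cdot_2),\partial)$ consists of bilinear maps $\cdot_1\colon N\times L\to L$, $\cdot_2\colon L\times N\to L$ forming a Leibniz action and a Leibniz homomorphism $\partial\colon L\to N$ with $\partial(n\cdot_1l)=[n,\partial l]$, $\partial(l\cdot_2n)=[\partial l,n]$, $\partial(l)\cdot_1l'=[l,l']=l\cdot_2\partial(l')$. A braiding on it is a pair of bilinear maps $\{-,-\},\langle-,-\rangle\colon N\times N\to L$ with, for all $l,l'\in L$, $n,n',n''\in N$: $\partial\{n,n'\}=[n,n']=\partial\langle n,n'\rangle$; $\{\partial l,\partial l'\}=[l,l']=\langle\partial l,\partial l'\rangle$; $\{\partial l,n\}=l\cdot_2n=\langle\partial l,n\rangle$; $\{n,\partial l\}=n\cdot_1l=\langle n,\partial l\rangle$; $\{n,[n',n'']\}=\{[n,n'],n''\}-\{[n,n''],n'\}$; $\langle n,[n',n'']\rangle=\{[n,n'],n''\}-\langle[n,n''],n'\rangle$; $\{n,[n',n'']\}=\{[n,n'],n''\}-\langle[n,n''],n'\rangle$;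 $\langle n,[n',n'']\rangle=\langle[n,n'],n''\rangle-\langle[n,n''],n'\rangle$. (The structure $(M\star M,M,(\cdot_1,\cdot_2),\partial)$ above is the non-abelian tensor product of $M$ with itself for the bracket actions, and is known to be a crossed module of Leibniz algebras.) *)

(* Defs.v *)
From HB Require Import structures.
From mathcomp Require Import all_boot all_order all_algebra.
Set Implicit Arguments. Unset Strict Implicit. Unset Printing Implicit Defensive.
Import GRing.Theory.
Local Open Scope ring_scope.

Section Defs.
Variable K : fieldType.

Definition linmap (A B : lmodType K) (f : A -> B) : Prop :=
  forall (a : K) x y, f (a *: x + y) = a *: f x + f y.

Definition bilin (A B C : lmodType K) (f : A -> B -> C) : Prop :=
  (forall (a : K) x x' y, f (a *: x + x') y = a *: f x y + f x' y) /\
  (forall (a : K) x y y', f x (a *: y + y') = a *: f x y + f x y').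

Definition leibniz (V : lmodType K) (br : V -> V -> V) : Prop :=
  bilin br /\ forall x y z, br x (br y z) = br (br x y) z - br (br x z) y.

Definition leib_hom (A B : lmodType K) (brA : A -> A -> A) (brB : B -> B -> B)
  (h : A -> B) : Prop :=
  linmap h /\ forall x y, h (brA x y) = brB (h x) (h y).

(* Leibniz action of (N, brN) on (L, brL) via bilinear maps
   act1 : N x L -> L and act2 : L x N -> L (the six identities expressing that
   the semidirect product L >< N is a Leibniz algebra). *)
Definition leib_action (L N : lmodType K) (brL : L -> L -> L) (brN : N -> N -> N)
  (act1 : N -> L -> L) (act2 : L -> N -> L) : Prop :=
  bilin act1 /\ bilin act2 /\
  (forall l n n', act2 l (brN n n') = act2 (act2 l n) n' - act2 (act2 l n') n) /\
  (forall n l n', act1 n (act2 l n') = act2 (act1 n l) n' - act1 (brN n n') l) /\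
  (forall n n' l, act1 n (act1 n' l) = act1 (brN n n') l - act2 (act1 n l) n') /\
  (forall l l' n, brL l (act2 l' n) = act2 (brL l l') n - brL (act2 l n) l') /\
  (forall l n l', brL l (act1 n l') = brL (act2 l n) l' - act2 (brL l l') n) /\
  (forall n l l', act1 n (brL l l') = brL (act1 n l) l' - brL (act1 n l') l).

Definition crossed_module (L N : lmodType K) (brL : L -> L -> L) (brN : N -> N -> N)
  (act1 : N -> L -> L) (act2 : L -> N -> L) (del : L -> N) : Prop :=
  leibniz brL /\ leibniz brN /\ leib_action brL brN act1 act2 /\
  leib_hom brL brN del /\
  (forall n l, del (act1 n l) = brN n (del l)) /\
  (forall l n, del (act2 l n) = brN (del l) n) /\
  (forall l l', act1 (del l) l' = brL l l') /\
  (forall l l', act2 l (del l') = brL l l').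

Definition braiding (L N : lmodType K) (brL : L -> L -> L) (brN : N -> N -> N)
  (act1 : N -> L -> L) (act2 : L -> N -> L) (del : L -> N)
  (b1 b2 : N -> N -> L) : Prop :=
  bilin b1 /\ bilin b2 /\
  (forall n n', del (b1 n n') = brN n n' /\ del (b2 n n') = brN n n') /\
  (forall l l', b1 (del l) (del l') = brL l l' /\ b2 (del l) (del l') = brL l l') /\
  (forall l n, b1 (del l) n = act2 l n /\ b2 (del l) n = act2 l n) /\
  (forall n l, b1 n (del l) = act1 n l /\ b2 n (del l) = act1 n l) /\
  (forall n n' n'', b1 n (brN n' n'') = b1 (brN n n') n'' - b1 (brN n n'') n') /\
  (forall n n' n'', b2 n (brN n' n'') = b1 (brN n n') n'' - b2 (brN n n'') n') /\
  (forall n n' n'', b1 n (brN n' n'') = b1 (brN n n') n'' - b2 (brN n n'') n') /\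
  (forall n n' n'', b2 n (brN n' n'') = b2 (brN n n') n'' - b2 (brN n n'') n').

(* The defining relations of M * M (t = tensor symbol, c = circledast symbol). *)
Definition star_rels (M P : lmodType K) (brM : M -> M -> M) (brP : P -> P -> P)
  (t c : M -> M -> P) : Prop :=
  (forall m1 m2 m3, t m1 (brM m2 m3) = t (brM m1 m2) m3 - t (brM m1 m3) m2) /\
  (forall m1 m2 m3, c m1 (brM m2 m3) = c (brM m1 m2) m3 - c (brM m1 m3) m2) /\
  (forall m1 m2 m3, t (brM m1 m2) m3 = c (brM m1 m3) m2 - t m1 (brM m3 m2)) /\
  (forall m1 m2 m3, c (brM m1 m2) m3 = t (brM m1 m3) m2 - c m1 (brM m3 m2)) /\
  (forall m1 m2 m3, t m1 (brM m2 m3) = - t m1 (brM m3 m2)) /\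
  (forall m1 m2 m3, c m1 (brM m2 m3) = - c m1 (brM m3 m2)) /\
  (forall (b b' : bool) m1 m2 m3 m4,
     let d := if b then t else c in let d' := if b' then t else c in
     t (brM m1 m2) (brM m3 m4) = brP (d m1 m2) (d' m3 m4) /\
     brP (d m1 m2) (d' m3 m4) = c (brM m1 m2) (brM m3 m4)).

(* (P, brP, t, c) is the Leibniz algebra M * M presented by generators
   t m1 m2, c m1 m2 (bilinear) and the relations star_rels, i.e. it has the
   universal property of that presentation. *)
Definition is_star (M P : lmodType K) (brM : M -> M -> M) (brP : P -> P -> P)
  (t c : M -> M -> P) : Prop :=
  leibniz brP /\ bilin t /\ bilin c /\ star_rels brM brP t c /\
  forall (Q : lmodType K) (brQ : Q -> Q -> Q) (t' c' : M -> M -> Q),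
    leibniz brQ -> bilin t' -> bilin c' -> star_rels brM brQ t' c' ->
    exists h : P -> Q,
      [/\ leib_hom brP brQ h,
          (forall m1 m2, h (t m1 m2) = t' m1 m2),
          (forall m1 m2, h (c m1 m2) = c' m1 m2) &
          (forall h' : P -> Q, leib_hom brP brQ h' ->
             (forall m1 m2, h' (t m1 m2) = t' m1 m2) ->
             (forall m1 m2, h' (c m1 m2) = c' m1 m2) -> forall x, h' x = h x)].

End Defs.

(* Main.v *)
Require Import Defs.
From HB Require Import structures.
From mathcomp Require Import all_boot all_order all_algebra.
From Stdlib Require Import ClassicalEpsilon.
Import GRing.Theory.
Local Open Scope ring_scope.
Set Implicit Arguments. Unset Strict Implicit. Unset Printing Implicit Defensive.

Section SubInd.
Variables (K : fieldType) (P : lmodType K) (S : {pred P}) (hS : GRing.submod_closed S).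
HB.instance Definition _ := GRing.isSubmodClosed.Build K P S (GRing.submod_closed_semi hS).
Inductive B := mkB x & x \in S.
Definition vB u := let: mkB x _ := u in x.
HB.instance Definition _ := [isSub for vB].
HB.instance Definition _ := [Choice of B by <:].
HB.instance Definition _ := [SubChoice_isSubZmodule of B by <:].
HB.instance Definition _ := [SubZmodule_isSubLmodule of B by <:].

Variables (M : lmodType K) (brM : M -> M -> M) (brP : P -> P -> P) (t c : M -> M -> P).
Hypothesis hbr : forall x y, x \in S -> y \in S -> brP x y \in S.
Hypothesis ht : forall m1 m2, t m1 m2 \in S.
Hypothesis hc : forall m1 m2, c m1 m2 \in S.

Definition brB (u v : B) : B := mkB (hbr (valP u) (valP v)).
Definition tB m1 m2 : B := mkB (ht m1 m2).
Definition cB m1 m2 : B := mkB (hc m1 m2).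

Lemma vB_inj : injective vB.
Proof. exact: val_inj. Qed.

Lemma star_all : is_star brM brP t c -> forall x, x \in S.
Proof.
move=> [hL [ht' [hc' [hR hU]]]].
have hLB : leibniz brB.
  case: hL => [[b1 b2] j]; split; first split.
  - by move=> a x x' y; apply: vB_inj; rewrite /= b1.
  - by move=> a x y y'; apply: vB_inj; rewrite /= b2.
  - by move=> x y z; apply: vB_inj; rewrite /= j.
have htB : bilin tB.
  case: ht' => b1 b2; split.
  - by move=> a x x' y; apply: vB_inj; rewrite /= b1.
  - by move=> a x y y'; apply: vB_inj; rewrite /= b2.
have hcB : bilin cB.
  case: hc' => b1 b2; split.
  - by move=> a x x' y; apply: vB_inj; rewrite /= b1.
  - by move=> a x y y'; apply: vB_inj; rewrite /= b2.
have hRB : star_rels brM brB tB cB.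
  case: hR => [r1 [r2 [r3 [r4 [r5 [r6 r7]]]]]].
  split; first by move=> *; apply: vB_inj; rewrite /= r1.
  split; first by move=> *; apply: vB_inj; rewrite /= r2.
  split; first by move=> *; apply: vB_inj; rewrite /= r3.
  split; first by move=> *; apply: vB_inj; rewrite /= r4.
  split; first by move=> *; apply: vB_inj; rewrite /= r5.
  split; first by move=> *; apply: vB_inj; rewrite /= r6.
  move=> b b' m1 m2 m3 m4 /=.
  have [e1 e2] := r7 b b' m1 m2 m3 m4.
  by split; apply: vB_inj; case: b e1 e2; case: b' => /= e1 e2.
have [h [[hlin hbrh] h1 h2 _]] := hU _ _ _ _ hLB htB hcB hRB.
have [g [_ _ _ gU]] := hU _ _ _ _ hL ht' hc' hR.
have e1 : forall x, vB (h x) = g x.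
  apply: gU.
  - split; first by move=> a x y; rewrite hlin.
    by move=> x y; rewrite hbrh.
  - by move=> m1 m2; rewrite h1.
  - by move=> m1 m2; rewrite h2.
have e2 : forall x, x = g x.
  apply: gU => //; split => //.
move=> x; rewrite (e2 x) -e1; exact: valP.
Qed.
End SubInd.

Lemma pb_ind (K : fieldType) (P : lmodType K) (M : lmodType K) (brM : M -> M -> M)
  (brP : P -> P -> P) (t c : M -> M -> P) (hP : is_star brM brP t c)
  (Sp : P -> Prop) :
  Sp 0 -> (forall (a : K) x y, Sp x -> Sp y -> Sp (a *: x + y)) ->
  (forall x y, Sp x -> Sp y -> Sp (brP x y)) ->
  (forall m1 m2, Sp (t m1 m2)) -> (forall m1 m2, Sp (c m1 m2)) -> forall x, Sp x.
Proof.
move=> h0 hl hb ht hc.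
pose S : {pred P} := fun x => if excluded_middle_informative (Sp x) then true else false.
have SP : forall x, reflect (Sp x) (x \in S).
  move=> x; rewrite unfold_in /S; case: excluded_middle_informative => ?; by constructor.
have hS : GRing.submod_closed S.
  split; first exact/SP.
  by move=> a x y /SP ? /SP ?; apply/SP; apply: hl.
move=> x; apply/SP.
have := @star_all K P S hS M brM brP t c _ _ _ hP x; apply.
Unshelve.
- by move=> ? ? /SP ? /SP ?; apply/SP; apply: hb.
- by move=> ? ?; apply/SP.
- by move=> ? ?; apply/SP.
Qed.

Lemma lin0 (K : fieldType) (A B : lmodType K) (f : A -> B) : linmap f -> f 0 = 0.
Proof.
move=> hf; have := hf 1 0 0; rewrite !scale1r addr0 => E.
by apply: (addrI (f 0)); rewrite addr0 -E.
Qed.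

Lemma bil0l (K : fieldType) (A B C : lmodType K) (f : A -> B -> C) y : bilin f -> f 0 y = 0.
Proof. by move=> [h _]; apply: (@lin0 K A C (fun x => f x y)) => a x x'; apply: h. Qed.

Lemma lemUV (V : zmodType) (X U W : V) : X = W + (X - U) -> U = W.
Proof.
move=> E; apply/eqP; rewrite eq_sym -subr_eq0; apply/eqP.
by apply: (addrI X); rewrite addr0 addrCA -E.
Qed.

Lemma bil0r (K : fieldType) (A B C : lmodType K) (f : A -> B -> C) x : bilin f -> f x 0 = 0.
Proof. by move=> [_ h]; apply: (@lin0 K B C (fun y => f x y)) => a y y'; apply: h. Qed.

Theorem mainTheorem8 (K : fieldType) (hK : (2%:R : K) != 0)
  (M : lmodType K) (brM : M -> M -> M) (hM : leibniz brM)
  (P : lmodType K) (brP : P -> P -> P) (t c : M -> M -> P)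
  (hP : is_star brM brP t c)
  (act1 : M -> P -> P) (act2 : P -> M -> P) (del : P -> M)
  (hXM : crossed_module brP brM act1 act2 del)
  (h1t : forall m m1 m2, act1 m (t m1 m2) = t (brM m m1) m2 - c (brM m m2) m1)
  (h1c : forall m m1 m2, act1 m (c m1 m2) = c (brM m m1) m2 - t (brM m m2) m1)
  (h2t : forall m m1 m2, act2 (t m1 m2) m = t (brM m1 m) m2 + t m1 (brM m2 m))
  (h2c : forall m m1 m2, act2 (c m1 m2) m = c (brM m1 m) m2 + c m1 (brM m2 m))
  (hdt : forall m1 m2, del (t m1 m2) = brM m1 m2)
  (hdc : forall m1 m2, del (c m1 m2) = brM m1 m2) :
  braiding brP brM act1 act2 del t c.
Proof.
have hP' := hP.
case: hP' => [hLP [htb [hcb [hR hU]]]].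
case: hR => [r1 [r2 [r3 [r4 [r5 [r6 r7]]]]]].
case: hXM => [_ [_ [hact [hdel [hd1 [hd2 [hc1 hc2]]]]]]].
case: hact => [ba1 [ba2 [a3 [a4 [a5 [a6 [a7 a8]]]]]]].
case: hdel => [dlin dbr].
have F1 : forall a m b, t (brM a m) b = c (brM a m) b.
  move=> a m b; apply: (lemUV (X := t (brM a b) m)).
  by rewrite -r1 (r3 a b m) (r5 a m b) opprK.
have F2 : forall a b m, t a (brM b m) = c a (brM b m).
  move=> a b m; by rewrite r1 r2 !F1.
have G1 : forall x y n, t (brM x y) n = t (brM x n) y + t x (brM y n).
  by move=> x y n; rewrite r3 -F1 r5 opprK.
have G2 : forall n m1 m2, act1 n (t m1 m2) = t n (brM m1 m2).
  by move=> n m1 m2; rewrite h1t -F1 r1.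
pose S (l : P) := forall n, t (del l) n = act2 l n /\ c (del l) n = act2 l n /\
    t n (del l) = act1 n l /\ c n (del l) = act1 n l.
have HS : forall l, S l.
  apply: (pb_ind hP).
  - move=> n; rewrite (lin0 dlin) (bil0l _ htb) (bil0l _ hcb).
    rewrite (bil0l _ ba2) (bil0r _ htb) (bil0r _ hcb) (bil0r _ ba1).
    done.
  - move=> a x y Hx Hy n.
    have [Hx1 [Hx2 [Hx3 Hx4]]] := Hx n; have [Hy1 [Hy2 [Hy3 Hy4]]] := Hy n.
    rewrite dlin !(proj1 htb, proj1 hcb, proj2 htb, proj2 hcb, proj1 ba2, proj2 ba1).
    by rewrite Hx1 Hx2 Hx3 Hx4 Hy1 Hy2 Hy3 Hy4.
  - move=> x y Hx Hy n.
    have e6 : act2 (brP x y) n = brP x (act2 y n) + brP (act2 x n) y.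
      by apply/eqP; rewrite -subr_eq -a6.
    have A1 : act2 (brP x y) n = t (del x) (brM (del y) n) + t (brM (del x) n) (del y).
      rewrite e6 -(Hy n).1 -hc2 hdt -(Hx (brM (del y) n)).1 -hc1 hd2.
      by rewrite -(proj1 (proj2 (proj2 (Hy (brM (del x) n))))).
    have A2 : act1 n (brP x y) = t n (brM (del x) (del y)).
      rewrite a8 -hc1 hd1 -hc1 hd1 -(proj1 (proj2 (proj2 (Hy (brM n (del x)))))).
      by rewrite -(proj1 (proj2 (proj2 (Hx (brM n (del y)))))) r1.
    rewrite dbr A1 A2 -F1 -F2 G1 addrC; done.
  - move=> m1 m2 n; rewrite hdt.
    split; first by rewrite G1 h2t.
    split; first by rewrite -F1 G1 h2t.
    split; first by rewrite G2.
    by rewrite -F2 G2.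
  - move=> m1 m2 n; rewrite hdc.
    split; first by rewrite h2c -F1 -F2 G1.
    split; first by rewrite -F1 h2c -F1 -F2 G1.
    split; first by rewrite h1c -F1 r1.
    by rewrite -F2 h1c -F1 r1.
split; first exact htb.
split; first exact hcb.
split; first by move=> n n'; rewrite hdt hdc.
split; first by move=> l l'; rewrite (HS l (del l')).1 (HS l (del l')).2.1 hc2.
split; first by move=> l n; have [? [? _]] := HS l n.
split; first by move=> n l; have [_ [_ [? ?]]] := HS l n.
split; first exact r1.
split; first by move=> n n' n''; rewrite -F2 -F1 r1.
split; first by move=> n n' n''; rewrite -F1 r1.
exact r2.
Qed.
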